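(* Let $\gamma$ be a positive integer, $1\le n'\le n$, and $\lambda_1,\dots,\lambda_n\in\mathbb C$. Assume (Condition 1) there exist $0\le\theta_{\Lambda'}<2\pi$ and $0<\delta_{\Lambda'}<\pi/2$ with $\{\lambda_1,\dots,\lambda_{n'}\}\subset\{\eta\ne0:|\arg\eta-\theta_{\Lambda'}|<\delta_{\Lambda'}\}$, and (Condition 2) $\sum_{j=1}^{n'}\lambda_jm_j-\lambda_i\ne0$ for all $m\in\mathbb N^{n'}$ with $|m|\ge2$ and all $1\le i\le n$. Let $\mathfrak L=\bigcup_{i=1}^n\{\sum_{j=1}^{n'}\lambda_jm_j-\lambda_i: m\in\mathbb N^{n'},|m|\ge2\}$. Then there exist an interval $\widehat J=(\widehat\theta_0-\widehat\epsilon_0,\widehat\theta_0+\widehat\epsilon_0)$ with $\widehat\epsilon_0>0$ and a constant $C_{\widehat J}>0$ such that $S(\widehat J)\cap(-\overline{\mathfrak L})=\emptyset$ and $$\Big|\gamma\eta+\sum_{j=1}^{n'}\lambda_jm_j-\lambda_i\Big|\ge C_{\widehat J}(|\eta|+|m|)$$ for all $\eta\in S(\widehat J)$, all $1\le i\le n$ and all $m\in\mathbb N^{n'}$ with $|m|\ge2$.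
   Context: $\mathbb N$ is the set of nonnegative integers, $|m|=\sum_j m_j$. For an open interval $J$, $S(J)=\{x\in\mathbb C\setminus\{0\}:\arg x\in J\}$. $\overline{\mathfrak L}$ is the closure of $\mathfrak L$ in $\mathbb C$. *)

(* Defs.v *)
From Stdlib Require Import Reals.
From Coquelicot Require Import Coquelicot.
Open Scope R_scope.

Fixpoint csum (k : nat) (f : nat -> C) : C :=
  match k with
  | O => RtoC 0
  | S k' => Cplus (csum k' f) (f k')
  end.

Fixpoint nsum (k : nat) (f : nat -> nat) : nat :=
  match k with
  | O => O
  | S k' => (nsum k' f + f k')%nat
  end.

Definition mabs (n' : nat) (m : nat -> nat) : nat := nsum n' m.

Definition lsum (n' : nat) (lam : nat -> C) (m : nat -> nat) : C :=
  csum n' (fun j => Cmult (lam j) (RtoC (INR (m j)))).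

(* x is a nonzero complex number having an argument phi satisfying P phi
   (arg is taken multivalued: x = |x| e^{i phi}). *)
Definition has_arg_in (P : R -> Prop) (x : C) : Prop :=
  x <> RtoC 0 /\
  exists phi : R, P phi /\ x = (Cmod x * cos phi, Cmod x * sin phi).

Definition sector (a b : R) (x : C) : Prop :=
  has_arg_in (fun phi => a < phi < b) x.

(* The set frak L (indices i : 0..n-1, j : 0..n'-1) *)
Definition frakL (n n' : nat) (lam : nat -> C) (z : C) : Prop :=
  exists (i : nat) (m : nat -> nat),
    (i < n)%nat /\ (2 <= mabs n' m)%nat /\ z = Cminus (lsum n' lam m) (lam i).

Definition cclosure (A : C -> Prop) (z : C) : Prop :=
  forall eps : R, 0 < eps -> exists w, A w /\ Cmod (Cminus z w) < eps.

(* Main.v *)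
Require Import Defs.
From Stdlib Require Import Reals List Lra Lia Classical.
From Coquelicot Require Import Coquelicot.
Open Scope R_scope.
Set Warnings "-all".

Definition Dp (u z : C) : R := fst u * fst z + snd u * snd z.
Definition Uv (t : R) : C := (cos t, sin t).

Lemma D_le_Cmod u z : fst u ^ 2 + snd u ^ 2 = 1 -> Dp u z <= Cmod z.
Proof.
  intros Hu. unfold Cmod, Dp. destruct u as [u1 u2]; destruct z as [x y]; cbn [fst snd] in *.
  destruct (Rle_dec (u1 * x + u2 * y) 0).
  - pose proof (sqrt_pos (x ^ 2 + y ^ 2)); lra.
  - rewrite <- (sqrt_pow2 (u1 * x + u2 * y)) by lra.
    apply sqrt_le_1_alt.
    assert (E : (u1 * x + u2 * y) ^ 2 + (u1 * y - u2 * x) ^ 2 = (u1^2 + u2^2) * (x^2 + y^2)) by ring.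
    rewrite Hu in E. pose proof (pow2_ge_0 (u1 * y - u2 * x)). lra.
Qed.

Lemma cos_abs x : cos (Rabs x) = cos x.
Proof.
  destruct (Rcase_abs x).
  - rewrite Rabs_left by lra. apply cos_neg.
  - rewrite Rabs_right by lra. reflexivity.
Qed.

Lemma cos_ge_abs a x : 0 <= a <= PI -> Rabs x <= a -> cos a <= cos x.
Proof.
  intros Ha Hx. rewrite <- (cos_abs x).
  destruct (Req_dec (Rabs x) a) as [E|E]. rewrite E; lra.
  left. pose proof (Rabs_pos x). apply cos_decreasing_1; lra.
Qed.

Lemma cos_le_abs a x : 0 <= a -> a <= Rabs x -> Rabs x <= PI -> cos x <= cos a.
Proof.
  intros Ha Hx Hp. rewrite <- (cos_abs x).
  destruct (Req_dec (Rabs x) a) as [E|E]. rewrite E; lra.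
  left. apply cos_decreasing_1; try lra.
Qed.

Lemma cos_near1 e : 0 < e -> exists a, 0 < a /\ forall x, Rabs x < a -> 1 - cos x < e.
Proof.
  intros He. pose proof (continuity_cos 0) as H.
  unfold continuity_pt, continue_in, limit1_in, limit_in in H.
  destruct (H e He) as [a [Ha Hx]]. exists a. split; [lra|].
  intros x Hxa. destruct (Req_dec x 0) as [E|E].
  - subst. rewrite cos_0; lra.
  - assert (Hd : R_dist (cos x) (cos 0) < e).
    { apply (Hx x). split. unfold D_x, no_cond. split; auto.
      simpl. unfold R_dist. rewrite Rminus_0_r. auto. }
    unfold R_dist in Hd. rewrite cos_0 in Hd.
    rewrite Rabs_minus_sym in Hd. pose proof (RRle_abs (1 - cos x)). lra.
Qed.

Lemma D_plus u a b : Dp u (Cplus a b) = Dp u a + Dp u b.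
Proof. unfold Dp; simpl; ring. Qed.

Lemma csum_S k f : csum (S k) f = Cplus (csum k f) (f k).
Proof. reflexivity. Qed.

Lemma D_lsum u lam c p m : (forall j, (j<p)%nat -> c <= Dp u (lam j)) ->
  c * INR (mabs p m) <= Dp u (lsum p lam m).
Proof.
  unfold mabs, lsum. induction p; intros H.
  - simpl. unfold Dp; simpl; lra.
  - rewrite csum_S, D_plus. simpl nsum. rewrite plus_INR.
    assert (E : Dp u (Cmult (lam p) (RtoC (INR (m p)))) = INR (m p) * Dp u (lam p)).
    { unfold Dp; simpl; ring. }
    rewrite E. specialize (IHp (fun j Hj => H j ltac:(lia))).
    pose proof (H p ltac:(lia)). pose proof (pos_INR (m p)).
    assert (c * INR (m p) <= INR (m p) * Dp u (lam p)) by nra. lra.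
Qed.

Lemma lsum_ext p lam f m : (forall j, (j<p)%nat -> f j = m j) -> lsum p lam f = lsum p lam m.
Proof.
  unfold lsum. induction p; intros H; auto. rewrite !csum_S.
  rewrite IHp by (intros; apply H; lia). rewrite H by lia. reflexivity.
Qed.

Lemma mabs_ext p f m : (forall j, (j<p)%nat -> f j = m j) -> mabs p f = mabs p m.
Proof.
  unfold mabs. induction p; intros H; auto. simpl.
  rewrite IHp by (intros; apply H; lia). rewrite H by lia. reflexivity.
Qed.

Lemma m_le_mabs p m j : (j < p)%nat -> (m j <= mabs p m)%nat.
Proof.
  unfold mabs; induction p; simpl; intros; [lia|].
  destruct (Nat.eq_dec j p); subst; [lia|]. specialize (IHp ltac:(lia)); lia.
Qed.

Fixpoint allm (p K : nat) : list (nat -> nat) :=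
  match p with
  | O => (fun _ => 0%nat) :: nil
  | S p' => flat_map (fun f => map (fun a => fun j => if Nat.eqb j p' then a else f j)
                                   (seq 0 (S K))) (allm p' K)
  end.

Lemma allm_spec p K m : (forall j, (j<p)%nat -> (m j <= K)%nat) ->
  exists f, In f (allm p K) /\ forall j, (j<p)%nat -> f j = m j.
Proof.
  induction p; intros H.
  - exists (fun _ => 0%nat). split; [left; reflexivity| intros; lia].
  - destruct IHp as [f [Hf Hfm]]. intros; apply H; lia.
    exists (fun j => if Nat.eqb j p then m p else f j). split.
    + apply in_flat_map. exists f. split; auto. apply in_map_iff.
      exists (m p). split; auto. apply in_seq. specialize (H p). lia.
    + intros j Hj. destruct (Nat.eqb_spec j p). subst; auto. apply Hfm; lia.
Qed.

Lemma pigeon (good : nat -> C -> Prop) (l : list C) :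
  forall S : list nat,
  (forall w k1 k2, In w l -> In k1 S -> In k2 S -> ~ good k1 w -> ~ good k2 w -> k1 = k2) ->
  NoDup S -> (length l < length S)%nat ->
  exists k, In k S /\ forall w, In w l -> good k w.
Proof.
  induction l as [|w l IH]; intros S Hu HS Hl.
  - destruct S as [|k S]; simpl in Hl; [lia|]. exists k. split; [left; auto| intros w []].
  - destruct (classic (exists k0, In k0 S /\ ~ good k0 w)) as [[k0 [Hk0 Hb]]|Hn].
    + destruct (in_split _ _ Hk0) as [l1 [l2 E]]. subst S.
      destruct (NoDup_remove _ _ _ HS) as [HS' Hni].
      destruct (IH (l1 ++ l2)) as [k [Hk Hg]].
      * intros w' k1 k2 Hw Hk1 Hk2. apply Hu; auto. right; auto.
        apply in_app_or in Hk1; apply in_or_app; destruct Hk1; [left|right;right]; auto.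
        apply in_app_or in Hk2; apply in_or_app; destruct Hk2; [left|right;right]; auto.
      * auto.
      * simpl in Hl. rewrite length_app in *. simpl in Hl. lia.
      * assert (Hk' : In k (l1 ++ k0 :: l2)).
        { apply in_app_or in Hk; apply in_or_app; destruct Hk; [left|right;right]; auto. }
        exists k. split; auto. intros w' [<-|Hw']; [|apply Hg; auto].
        destruct (classic (good k w)) as [G|G]; auto.
        exfalso. assert (k = k0) by (apply (Hu w) ; auto; left; auto). subst. contradiction.
    + destruct (IH S) as [k [Hk Hg]].
      * intros w' k1 k2 H1 H2 H3 H4 H5; apply (Hu w'); auto. right; auto.
      * auto.
      * simpl in Hl; lia.
      * exists k. split; auto. intros w' [<-|Hw']; [|apply Hg; auto].
        destruct (classic (good k w)) as [G|G]; auto. exfalso; apply Hn; eauto.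
Qed.

Lemma sc1 t : cos t ^ 2 + sin t ^ 2 = 1.
Proof. pose proof (sin2_cos2 t). unfold Rsqr in H. lra. Qed.

Lemma chord t1 t2 : (cos t1 - cos t2)^2 + (sin t1 - sin t2)^2 = 2 - 2 * cos (t1 - t2).
Proof.
  rewrite cos_minus. pose proof (sc1 t1). pose proof (sc1 t2).
  replace ((cos t1 - cos t2)^2 + (sin t1 - sin t2)^2) with
    ((cos t1 ^ 2 + sin t1 ^ 2) + (cos t2 ^ 2 + sin t2 ^ 2) - 2 * (cos t1 * cos t2 + sin t1 * sin t2)) by ring.
  lra.
Qed.

Lemma gb_real g r cf sf ct st w1 w2 tau :
  cf^2 + sf^2 = 1 -> ct^2 + st^2 = 1 -> 0 < w1^2 + w2^2 -> 0 < tau <= 1 -> 0 <= g -> 0 <= r ->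
  ct * (- w1 / sqrt (w1^2 + w2^2)) + st * (- w2 / sqrt (w1^2 + w2^2)) <= 1 - 2 * tau ->
  (cf - ct)^2 + (sf - st)^2 <= tau^2 ->
  tau / 2 * (g * r + sqrt (w1^2 + w2^2))^2 <= (g * r * cf + w1)^2 + (g * r * sf + w2)^2.
Proof.
  intros Hf Ht Hw Htau Hg Hr Hgood Hclose.
  set (W := sqrt (w1^2 + w2^2)) in *.
  assert (HW : 0 < W) by (apply sqrt_lt_R0; auto).
  assert (HW2 : W * W = w1^2 + w2^2) by (apply sqrt_sqrt; lra).
  set (b1 := - w1 / W) in *. set (b2 := - w2 / W) in *.
  assert (E1 : w1 = - W * b1) by (unfold b1; field; lra).
  assert (E2 : w2 = - W * b2) by (unfold b2; field; lra).
  assert (Hb : b1^2 + b2^2 = 1).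
  { apply (Rmult_eq_reg_l (W * W)); [| nra].
    replace (W * W * (b1^2 + b2^2)) with ((W*b1)^2 + (W*b2)^2) by ring.
    replace ((W*b1)^2) with (w1^2) by (rewrite E1; ring).
    replace ((W*b2)^2) with (w2^2) by (rewrite E2; ring). lra. }
  set (p := cf - ct) in *. set (q := sf - st) in *.
  assert (Lag : (p * b1 + q * b2)^2 + (p * b2 - q * b1)^2 = (p^2 + q^2) * (b1^2 + b2^2)) by ring.
  rewrite Hb in Lag.
  assert (Hpq : p * b1 + q * b2 <= tau).
  { pose proof (pow2_ge_0 (p * b2 - q * b1)).
    destruct (Rle_dec (p * b1 + q * b2) tau); auto. nra. }
  assert (HDe : cf * b1 + sf * b2 <= 1 - tau).
  { replace (cf * b1 + sf * b2) with (ct * b1 + st * b2 + (p * b1 + q * b2)) by (unfold p, q; ring). lra. }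
  rewrite E1, E2.
  replace ((g * r * cf + - W * b1) ^ 2 + (g * r * sf + - W * b2) ^ 2) with
    ((g*r)^2 * (cf^2 + sf^2) + W^2 * (b1^2 + b2^2) - 2 * (g * r) * W * (cf * b1 + sf * b2)) by ring.
  rewrite Hf, Hb.
  assert (Hid : (g*r)^2 * 1 + W^2 * 1 - 2 * (g*r) * W * (cf * b1 + sf * b2) - tau/2 * (g*r + W)^2
     = (1 - tau/2) * (g*r - W)^2 + 2 * (g*r*W) * (1 - tau - (cf * b1 + sf * b2))) by field.
  assert (0 <= (1 - tau/2) * (g*r - W)^2) by (apply Rmult_le_pos; [lra| apply pow2_ge_0]).
  assert (0 <= g * r * W) by (apply Rmult_le_pos; [apply Rmult_le_pos|]; lra).
  assert (0 <= 2 * (g*r*W) * (1 - tau - (cf * b1 + sf * b2))) by (apply Rmult_le_pos; lra).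
  lra.
Qed.

Lemma uniq_real c1 s1 c2 s2 b1 b2 tau :
  c1^2 + s1^2 = 1 -> c2^2 + s2^2 = 1 -> b1^2 + b2^2 = 1 ->
  c1 * b1 + s1 * b2 > 1 - 2 * tau -> c2 * b1 + s2 * b2 > 1 - 2 * tau ->
  (c1 - c2)^2 + (s1 - s2)^2 < 16 * tau.
Proof.
  intros H1 H2 Hb D1 D2.
  assert (E1 : (c1 - b1)^2 + (s1 - b2)^2 = 2 - 2 * (c1 * b1 + s1 * b2)).
  { replace ((c1 - b1)^2 + (s1 - b2)^2) with ((c1^2 + s1^2) + (b1^2+b2^2) - 2 * (c1 * b1 + s1 * b2)) by ring. lra. }
  assert (E2 : (c2 - b1)^2 + (s2 - b2)^2 = 2 - 2 * (c2 * b1 + s2 * b2)).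
  { replace ((c2 - b1)^2 + (s2 - b2)^2) with ((c2^2 + s2^2) + (b1^2+b2^2) - 2 * (c2 * b1 + s2 * b2)) by ring. lra. }
  assert (Hpar : (c1 - c2)^2 + (s1 - s2)^2 <= 2 * ((c1 - b1)^2 + (s1 - b2)^2) + 2 * ((c2 - b1)^2 + (s2 - b2)^2)).
  { pose proof (pow2_ge_0 (c1 + c2 - 2 * b1)). pose proof (pow2_ge_0 (s1 + s2 - 2 * b2)).
    replace (2 * ((c1 - b1)^2 + (s1 - b2)^2) + 2 * ((c2 - b1)^2 + (s2 - b2)^2)) with
      ((c1 - c2)^2 + (s1 - s2)^2 + (c1 + c2 - 2 * b1)^2 + (s1 + s2 - 2 * b2)^2) by ring. lra. }
  lra.
Qed.

Fixpoint cminf (u : C) (lam : nat -> C) (p : nat) : R :=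
  match p with O => 1 | S p => Rmin (cminf u lam p) (Dp u (lam p)) end.

Lemma cminf_spec u lam p : (forall j, (j<p)%nat -> 0 < Dp u (lam j)) ->
  0 < cminf u lam p /\ forall j, (j<p)%nat -> cminf u lam p <= Dp u (lam j).
Proof.
  induction p; simpl; intros H. split; [lra | intros; lia].
  destruct IHp as [H1 H2]. intros; apply H; lia.
  split. apply Rmin_glb_lt; auto; apply H; lia.
  intros j Hj. destruct (Nat.eq_dec j p). subst; apply Rmin_r.
  eapply Rle_trans; [apply Rmin_l| apply H2; lia].
Qed.

Fixpoint msum (lam : nat -> C) (p : nat) : R :=
  match p with O => 0 | S p => msum lam p + Cmod (lam p) end.

Lemma msum_nonneg lam p : 0 <= msum lam p.
Proof. induction p; simpl; [lra|]. pose proof (Cmod_ge_0 (lam p)); lra. Qed.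

Lemma msum_spec lam p i : (i<p)%nat -> Cmod (lam i) <= msum lam p.
Proof.
  induction p; simpl; intros; [lia|]. pose proof (Cmod_ge_0 (lam p)).
  destruct (Nat.eq_dec i p); subst. pose proof (msum_nonneg lam p); lra.
  specialize (IHp ltac:(lia)); lra.
Qed.

Definition wmin (l : list C) : R := fold_right (fun w a => Rmin (Cmod w) a) 1 l.

Lemma wmin_spec l : (forall w, In w l -> w <> RtoC 0) ->
  0 < wmin l /\ forall w, In w l -> wmin l <= Cmod w.
Proof.
  induction l as [|x l IH]; simpl; intros H. split; [lra|tauto].
  destruct IH as [H1 H2]; auto. split.
  apply Rmin_glb_lt; auto. apply Cmod_gt_0; auto.
  intros w [<-|Hw]. apply Rmin_l. eapply Rle_trans; [apply Rmin_r| auto].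
Qed.

Definition bvec (w : C) : C := (- fst w / Cmod w, - snd w / Cmod w).

Lemma bvec_unit w : w <> RtoC 0 -> fst (bvec w) ^ 2 + snd (bvec w) ^ 2 = 1.
Proof.
  intros H. apply Cmod_gt_0 in H. unfold bvec; cbn [fst snd].
  assert (E : Cmod w * Cmod w = fst w ^ 2 + snd w ^ 2).
  { unfold Cmod. apply sqrt_sqrt. pose proof (pow2_ge_0 (fst w)); pose proof (pow2_ge_0 (snd w)); lra. }
  field_simplify; [| lra]. rewrite <- E. field. lra.
Qed.

Lemma nat_dist k1 k2 : k1 <> k2 -> 1 <= Rabs (INR k1 - INR k2).
Proof.
  intros H. destruct (Nat.lt_gt_cases k1 k2) as [[L|L] _]; auto.
  - apply le_INR in L. rewrite S_INR in L. unfold Rabs; destruct Rcase_abs; lra.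
  - apply le_INR in L. rewrite S_INR in L. unfold Rabs; destruct Rcase_abs; lra.
Qed.

Theorem lemma2p3 (gamma n n' : nat) (lam : nat -> C) :
  (0 < gamma)%nat -> (1 <= n')%nat -> (n' <= n)%nat ->
  (* Condition 1 *)
  (exists theta delta : R,
      0 <= theta < 2 * PI /\ 0 < delta < PI / 2 /\
      forall j : nat, (j < n')%nat ->
        has_arg_in (fun phi => Rabs (phi - theta) < delta) (lam j)) ->
  (* Condition 2 *)
  (forall (m : nat -> nat) (i : nat), (2 <= mabs n' m)%nat -> (i < n)%nat ->
      Cminus (lsum n' lam m) (lam i) <> RtoC 0) ->
  exists theta0 eps0 CJ : R,
    0 < eps0 /\ 0 < CJ /\
    (forall x : C, sector (theta0 - eps0) (theta0 + eps0) x ->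
        ~ cclosure (frakL n n' lam) (Copp x)) /\
    (forall (eta : C) (i : nat) (m : nat -> nat),
        sector (theta0 - eps0) (theta0 + eps0) eta -> (i < n)%nat ->
        (2 <= mabs n' m)%nat ->
        CJ * (Cmod eta + INR (mabs n' m)) <=
        Cmod (Cminus (Cplus (Cmult (RtoC (INR gamma)) eta) (lsum n' lam m)) (lam i))).
Proof.
  intros Hg Hn' Hnn [th [dl [Hth [Hdl Hlam]]]] Hc2.
  pose proof PI_RGT_0 as HPI.
  set (u := Uv th).
  assert (Hu1 : fst u ^ 2 + snd u ^ 2 = 1) by (apply sc1).
  assert (Hpos : forall j, (j < n')%nat -> 0 < Dp u (lam j)).
  { intros j Hj. destruct (Hlam j Hj) as [Hne [phi [Hphi Hl]]].
    assert (E : Dp u (lam j) = Cmod (lam j) * cos (phi - th)).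
    { rewrite cos_minus. unfold Dp, u, Uv. set (r := Cmod (lam j)) in *. rewrite Hl. cbn [fst snd]. ring. }
    rewrite E. apply Rmult_lt_0_compat. apply Cmod_gt_0; auto.
    apply Rabs_def2 in Hphi. apply cos_gt_0; lra. }
  destruct (cminf_spec u lam n' Hpos) as [Hc0 Hc].
  set (c := cminf u lam n') in *.
  set (M := msum lam n).
  assert (HM0 : 0 <= M) by apply msum_nonneg.
  destruct (INR_unbounded (2 * M / c)) as [K0 HK0].
  set (K := S K0).
  assert (HK : INR K > 2 * M / c) by (unfold K; rewrite S_INR; lra).
  assert (HK1 : 1 <= INR K) by (unfold K; rewrite S_INR; pose proof (pos_INR K0); lra).
  set (wl := flat_map (fun i => map (fun f => Cminus (lsum n' lam f) (lam i))
               (filter (fun f => Nat.leb 2 (mabs n' f)) (allm n' K))) (seq 0 n)).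
  assert (Hwl : forall w, In w wl -> w <> RtoC 0).
  { intros w Hw. unfold wl in Hw. apply in_flat_map in Hw as [i [Hi Hw]].
    apply in_map_iff in Hw as [f [<- Hf]]. apply filter_In in Hf as [_ Hf].
    apply Nat.leb_le in Hf. apply in_seq in Hi. apply Hc2; lia. }
  assert (Hwin : forall i m, (i < n)%nat -> (2 <= mabs n' m)%nat -> (mabs n' m <= K)%nat ->
     exists f, In (Cminus (lsum n' lam f) (lam i)) wl /\ lsum n' lam f = lsum n' lam m).
  { intros i m Hi Hm HmK. destruct (allm_spec n' K m) as [f [Hf Hfm]].
    { intros j Hj; pose proof (m_le_mabs n' m j Hj); lia. }
    exists f. split; [| apply lsum_ext; auto].
    unfold wl; apply in_flat_map. exists i; split. apply in_seq; lia.
    apply in_map_iff. exists f. split; auto. apply filter_In; split; auto.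
    apply Nat.leb_le. rewrite (mabs_ext _ _ _ Hfm); auto. }
  destruct (wmin_spec wl Hwl) as [Hw0 Hwm].
  set (wm := wmin wl) in *.
  set (N := length wl).
  set (s := PI / (6 * (INR N + 1))).
  assert (HN0 : 0 <= INR N) by apply pos_INR.
  assert (Hs0 : 0 < s) by (unfold s; apply Rdiv_lt_0_compat; lra).
  assert (HNs : INR N * s < PI / 6).
  { unfold s. set (a := INR N) in *.
    replace (a * (PI / (6 * (a + 1)))) with (PI / 6 * (a / (a + 1))) by (field; lra).
    assert (H : a / (a + 1) < 1).
    { unfold Rdiv; apply (Rmult_lt_reg_r (a + 1)); [lra|].
      rewrite Rmult_assoc, Rinv_l by lra. lra. }
    assert (0 < PI / 6) by lra. nra. }
  assert (HsPI : s <= PI / 6).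
  { unfold s. apply (Rmult_le_reg_r (6 * (INR N + 1))); [lra|].
    unfold Rdiv. rewrite Rmult_assoc, Rinv_l by lra. nra. }
  set (tau := (1 - cos s) / 8).
  assert (Htau : 0 < tau <= 1).
  { assert (cos s < cos 0) by (apply cos_decreasing_1; lra). rewrite cos_0 in H.
    pose proof (COS_bound s). unfold tau; lra. }
  destruct (cos_near1 (tau ^ 2 / 2)) as [al [Hal Hcal]].
  { assert (0 < tau ^ 2) by (apply pow_lt; lra). lra. }
  set (eps := Rmin al (PI / 6)).
  assert (Heps0 : 0 < eps) by (apply Rmin_glb_lt; lra).
  assert (Heps1 : eps <= al) by apply Rmin_l.
  assert (Heps2 : eps <= PI / 6) by apply Rmin_r.
  set (good := fun k w => w = RtoC 0 \/ Dp (Uv (th + INR k * s)) (bvec w) <= 1 - 2 * tau).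
  destruct (pigeon good wl (seq 0 (S N))) as [k [Hk Hgood]].
  { intros w k1 k2 Hw Hk1 Hk2 Hb1 Hb2.
    apply not_or_and in Hb1 as [Hz Hb1]. apply not_or_and in Hb2 as [_ Hb2].
    apply Rnot_le_lt in Hb1. apply Rnot_le_lt in Hb2.
    destruct (Nat.eq_dec k1 k2) as [E|E]; auto. exfalso.
    apply in_seq in Hk1. apply in_seq in Hk2.
    pose proof (uniq_real _ _ _ _ _ _ tau (sc1 (th + INR k1 * s)) (sc1 (th + INR k2 * s))
                  (bvec_unit w Hz) Hb1 Hb2) as HU.
    rewrite chord in HU.
    replace (th + INR k1 * s - (th + INR k2 * s)) with ((INR k1 - INR k2) * s) in HU by ring.
    assert (Hd := nat_dist k1 k2 E).
    assert (Hd2 : Rabs (INR k1 - INR k2) <= INR N).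
    { assert (INR k1 <= INR N) by (apply le_INR; lia).
      assert (INR k2 <= INR N) by (apply le_INR; lia).
      pose proof (pos_INR k1); pose proof (pos_INR k2).
      apply Rabs_le; lra. }
    assert (Hx : Rabs ((INR k1 - INR k2) * s) = Rabs (INR k1 - INR k2) * s).
    { rewrite Rabs_mult. rewrite (Rabs_right s) by lra. reflexivity. }
    assert (Hc' : cos ((INR k1 - INR k2) * s) <= cos s).
    { apply cos_le_abs; rewrite ?Hx; nra. }
    unfold tau in HU. lra. }
  { apply seq_NoDup. }
  { rewrite length_seq. unfold N. lia. }
  apply in_seq in Hk.
  assert (HkN : 0 <= INR k * s <= INR N * s).
  { pose proof (pos_INR k). assert (INR k <= INR N) by (apply le_INR; lia). nra. }
  set (t0 := th + INR k * s).
  set (kap := sqrt (tau / 2)).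
  assert (Hkap : 0 < kap) by (apply sqrt_lt_R0; lra).
  assert (Hkap2 : kap * kap = tau / 2) by (apply sqrt_sqrt; lra).
  set (CJ := Rmin (Rmin (1/2) (c/2)) (Rmin kap (kap * wm / INR K))).
  assert (HCJ1 : CJ <= 1/2) by (unfold CJ; eapply Rle_trans; [apply Rmin_l| apply Rmin_l]).
  assert (HCJ2 : CJ <= c/2) by (unfold CJ; eapply Rle_trans; [apply Rmin_l| apply Rmin_r]).
  assert (HCJ3 : CJ <= kap) by (unfold CJ; eapply Rle_trans; [apply Rmin_r| apply Rmin_l]).
  assert (HCJ4 : CJ <= kap * wm / INR K) by (unfold CJ; eapply Rle_trans; [apply Rmin_r| apply Rmin_r]).
  assert (HCJ : 0 < CJ).
  { unfold CJ. apply Rmin_glb_lt; apply Rmin_glb_lt; try lra.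
    unfold Rdiv. apply Rmult_lt_0_compat. nra. apply Rinv_0_lt_compat; lra. }
  assert (Core : forall g eta i m, 1 <= g -> sector (t0 - eps) (t0 + eps) eta -> (i < n)%nat ->
            (2 <= mabs n' m)%nat ->
            CJ * (Cmod eta + INR (mabs n' m)) <=
            Cmod (Cminus (Cplus (Cmult (RtoC g) eta) (lsum n' lam m)) (lam i))).
  { intros g eta i m Hg1 [Hne [phi [Hphi Heta]]] Hi Hm.
    assert (Hr : 0 <= Cmod eta) by apply Cmod_ge_0.
    assert (HI : 0 <= INR (mabs n' m)) by apply pos_INR.
    destruct (Rle_dec (2 * M) (c * INR (mabs n' m))) as [Hlarge|Hsmall].
    - eapply Rle_trans; [| apply (D_le_Cmod u); exact Hu1].
      assert (E : Dp u (Cminus (Cplus (Cmult (RtoC g) eta) (lsum n' lam m)) (lam i))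
                  = g * Dp u eta + Dp u (lsum n' lam m) - Dp u (lam i)) by (unfold Dp; simpl; ring).
      rewrite E.
      assert (Eeta : Dp u eta = Cmod eta * cos (phi - th)).
      { rewrite cos_minus. unfold Dp, u, Uv. set (r := Cmod eta) in *. rewrite Heta. cbn [fst snd]. ring. }
      assert (Hcos : 1/2 <= cos (phi - th)).
      { rewrite <- cos_PI3. apply cos_ge_abs. lra. apply Rabs_le. unfold t0 in Hphi. lra. }
      assert (HL := D_lsum u lam c n' m Hc).
      assert (HM : Dp u (lam i) <= M).
      { eapply Rle_trans; [apply D_le_Cmod; exact Hu1 | apply msum_spec; auto]. }
      rewrite Eeta.
      assert (A1 : CJ * Cmod eta <= 1/2 * Cmod eta) by nra.
      assert (A2 : CJ * INR (mabs n' m) <= c / 2 * INR (mabs n' m)) by nra.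
      assert (A0 : 1/2 <= g * cos (phi - th)).
      { assert (0 <= (g - 1) * cos (phi - th)) by (apply Rmult_le_pos; lra). lra. }
      assert (A3 : 1/2 * Cmod eta <= g * (Cmod eta * cos (phi - th))).
      { replace (g * (Cmod eta * cos (phi - th))) with (Cmod eta * (g * cos (phi - th))) by ring.
        rewrite Rmult_comm. apply Rmult_le_compat_l; lra. }
      lra.
    - assert (HmK : (mabs n' m <= K)%nat).
      { assert (HI2 : INR (mabs n' m) < 2 * M / c).
        { unfold Rdiv. apply (Rmult_lt_reg_l c); auto.
          replace (c * (2 * M * / c)) with (2 * M) by (field; lra). lra. }
        assert (INR (mabs n' m) < INR K) by lra. apply INR_lt in H. lia. }
      destruct (Hwin i m Hi Hm HmK) as [f [Hfin Hfl]].
      set (w := Cminus (lsum n' lam f) (lam i)) in *.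
      assert (Hwz := Hwl w Hfin).
      destruct (Hgood w Hfin) as [Hz|Hgw]; [contradiction|].
      assert (Hclose : (cos phi - cos t0)^2 + (sin phi - sin t0)^2 <= tau^2).
      { rewrite chord. assert (Rabs (phi - t0) < al) by (apply Rabs_def1; lra).
        specialize (Hcal _ H). lra. }
      assert (HW : Cmod w = sqrt (fst w ^ 2 + snd w ^ 2)) by reflexivity.
      assert (Hwpos : 0 < fst w ^ 2 + snd w ^ 2).
      { apply Cmod_gt_0 in Hwz. unfold Cmod in Hwz.
        destruct (Rle_dec (fst w ^ 2 + snd w ^ 2) 0) as [Hle|]; [|lra].
        rewrite sqrt_neg_0 in Hwz; lra. }
      assert (Eq : Cmod (Cminus (Cplus (Cmult (RtoC g) eta) (lsum n' lam m)) (lam i))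
                   = sqrt ((g * Cmod eta * cos phi + fst w)^2 + (g * Cmod eta * sin phi + snd w)^2)).
      { unfold Cmod at 1. rewrite <- Hfl. set (r := Cmod eta) in *. rewrite Heta. unfold w. f_equal. simpl. ring. }
      rewrite Eq.
      assert (Hgb := gb_real g (Cmod eta) (cos phi) (sin phi) (cos t0) (sin t0) (fst w) (snd w) tau
                      (sc1 phi) (sc1 t0) Hwpos Htau ltac:(lra) Hr Hgw Hclose).
      rewrite <- HW in Hgb.
      assert (Hk2 : kap * (g * Cmod eta + Cmod w) <= sqrt ((g * Cmod eta * cos phi + fst w)^2 + (g * Cmod eta * sin phi + snd w)^2)).
      { pose proof (Cmod_ge_0 w).
        rewrite <- (sqrt_pow2 (kap * (g * Cmod eta + Cmod w))) by
          (apply Rmult_le_pos; [lra| pose proof (Rmult_le_pos g (Cmod eta) ltac:(lra) Hr); lra]).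
        apply sqrt_le_1_alt.
        replace ((kap * (g * Cmod eta + Cmod w)) ^ 2) with (kap * kap * (g * Cmod eta + Cmod w) ^ 2) by ring.
        rewrite Hkap2. exact Hgb. }
      assert (Hwmw : wm <= Cmod w) by (apply Hwm; auto).
      assert (B1 : CJ * Cmod eta <= kap * (g * Cmod eta)).
      { assert (CJ * Cmod eta <= kap * Cmod eta) by (apply Rmult_le_compat_r; lra).
        assert (0 <= kap * ((g - 1) * Cmod eta)) by (apply Rmult_le_pos; [lra| apply Rmult_le_pos; lra]).
        replace (kap * (g * Cmod eta)) with (kap * Cmod eta + kap * ((g - 1) * Cmod eta)) by ring. lra. }
      assert (B2 : CJ * INR (mabs n' m) <= kap * wm / INR K * INR (mabs n' m)) by (apply Rmult_le_compat_r; lra).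
      assert (B3 : kap * wm / INR K * INR (mabs n' m) <= kap * wm).
      { assert (INR (mabs n' m) <= INR K) by (apply le_INR; auto).
        unfold Rdiv. replace (kap * wm * / INR K * INR (mabs n' m)) with (kap * wm * (INR (mabs n' m) / INR K)) by (field; lra).
        assert (INR (mabs n' m) / INR K <= 1).
        { unfold Rdiv; apply (Rmult_le_reg_r (INR K)); [lra|].
          rewrite Rmult_assoc, Rinv_l by lra. lra. }
        assert (0 <= kap * wm) by nra. nra. }
      assert (B4 : kap * wm <= kap * Cmod w) by (apply Rmult_le_compat_l; lra).
      lra. }
  exists t0, eps, CJ. split; [auto | split; [auto | split]].
  - intros x Hx Hcl. destruct Hx as [Hne Hx'].
    assert (Hxs : sector (t0 - eps) (t0 + eps) x) by (split; auto).
    assert (Hxp : 0 < Cmod x) by (apply Cmod_gt_0; auto).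
    destruct (Hcl (CJ * Cmod x)) as [w [[i [m [Hi [Hm Hw]]]] Hd]].
    { apply Rmult_lt_0_compat; auto. }
    pose proof (Core 1 x i m (Rle_refl 1) Hxs Hi Hm) as Hc1.
    assert (E : Cmod (Cminus (Copp x) w) =
                Cmod (Cminus (Cplus (Cmult (RtoC 1) x) (lsum n' lam m)) (lam i))).
    { rewrite Hw. unfold Cmod. f_equal. simpl. ring. }
    rewrite E in Hd. pose proof (pos_INR (mabs n' m)). nra.
  - intros eta i m Heta Hi Hm. apply Core; auto.
    replace 1 with (INR 1) by reflexivity. apply le_INR; lia.
Qed.
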